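(* Assume that the presentation $\mathcal{P}^{[2]}_r(e,b)$ is consistent and that the test equations \begin{align*} c(a_k c(a_j a_i)) &= c(c(a_k a_j) a_i) & (w(a_k)+w(a_j)+w(a_i) \leq d),\\ c(r_j c(a_j a_i)) &= c( c(r_j a_j) a_i) & (r_j < \infty,\ w(a_j)+w(a_i) \leq d),\\ c(r_i c(a_j a_i )) &= c( a_j c( r_i a_i)) & (r_i < \infty,\ w(a_j)+w(a_i) \leq d) \end{align*} hold. Then $\tau_L$ and $\tau_R$ induce $R$-linear maps $\varphi_L, \varphi_R \colon A^{[2]} \rightarrow A^{[2]}$.
   Context: Let $R$ be a field or the ring of integers; all algebras are associative. $\mathcal{P}_r(e,b)$ is a nilpotent presentation on generators $a_1,\ldots,a_n$ with $r_1,\ldots,r_n \in \mathbb N \cup \{\infty\}$ and $e_{i,k}, b_{i,j,k} \in R$ (with $0 \leq e_{i,k}, b_{i,j,k} < r_k$ whenever $r_k<\infty$) and relations $r_i a_i = e_{i,i+1} a_{i+1} + \ldots + e_{i,n} a_n$ (for $r_i<\infty$) and $a_j a_i = b_{i,j,\ell+1} a_{\ell+1} + \ldots + b_{i,j,n} a_n$ with $\ell = \max\{i,j\}$ (for $1\le i,j\le n$). For $1 \le k \le n$, $\mathcal{P}^{[k]}_r(e,b)$ is the presentation on $a_k,\ldots,a_n$ whose relations are those relations of $\mathcal{P}_r(e,b)$ involving only these generators; $A^{[k]}$ is the algebra it defines and $F_k$ is the free associative algebra on $a_k,\ldots,a_n$. A presentation is consistent if each element of the defined algebra is represented by a unique reduced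 form $x_1a_1+\ldots+x_na_n$ ($0\le x_i<r_i$ if $r_i<\infty$). $c$ denotes the function on the free algebra induced by the collection algorithm, mapping an element to one of its reduced forms. $w$ is a weight function: $w(a_i)\in\mathbb N$ minimal subject to $w(a_k)\ge w(a_i)$ whenever $e_{i,k}\neq0$ and $w(a_k)\ge w(a_i)+w(a_j)$ whenever $b_{i,j,k}\ne 0$; $d=\max\{w(a_1),\ldots,w(a_n)\}$. The maps $\tau_L,\tau_R\colon F_2\to F_2$ are defined by $\tau_L(a_j)=\sum_{k=1}^n b_{j,1,k}a_k$ with $\tau_L(vw)=\tau_L(v)w$ for all $v,w\in F_2$, and $\tau_R(a_j)=\sum_{k=1}^n b_{1,j,k}a_k$ with $\tau_R(vw)=v\tau_R(w)$ for all $v,w\in F_2$ (i.e. left resp. right multiplication by $a_1$ expressed via the relations). *)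

(* Defs.v *)
From mathcomp Require Import all_boot all_order all_algebra.
Set Implicit Arguments. Unset Strict Implicit. Unset Printing Implicit Defensive.
Import Order.TTheory GRing.Theory Num.Theory.
Local Open Scope ring_scope.

(* Generators a_1, ..., a_n are indexed by the natural numbers 1..n.
   [pr i = None] encodes r_i = infinity, [pr i = Some q] encodes r_i = q.
   [pe i k] = e_{i,k}, [pb i j k] = b_{i,j,k}; only the values with
   k > i (resp. k > max i j) and 1 <= i,j,k <= n are ever used. *)
Record presentation (R : Type) := Pres {
  pn : nat;
  pr : nat -> option nat;
  pe : nat -> nat -> R;
  pb : nat -> nat -> nat -> R }.

Section Pres.
Variable R : comNzRingType.
(* [crange x q] : the admissible range "0 <= x < q" for coefficients
   (for R = int: 0 <= x < q; for a field all r_i are infinite so it is unused).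
   [cdiv x q] : (quotient, remainder) of x by the relative order q. *)
Variable crange : R -> nat -> bool.
Variable cdiv : R -> nat -> R * R.
Variable P : presentation R.

Local Notation n := (pn P).
Local Notation r := (pr P).
Local Notation e := (pe P).
Local Notation b := (pb P).

Definition inrng (k i : nat) : bool := (k <= i <= n)%N.

Definition wf_pres : Prop :=
  (forall i q, inrng 1 i -> r i = Some q -> (0 < q)%N) /\
  (forall i k q, inrng 1 i -> inrng 1 k -> (i < k)%N -> r i <> None ->
      r k = Some q -> crange (e i k) q) /\
  (forall i j k q, inrng 1 i -> inrng 1 j -> inrng 1 k -> (maxn i j < k)%N ->
      r k = Some q -> crange (b i j k) q).

(* An element of the free algebra is represented by its coefficient function
   on words (words = seq nat, letter i standing for a_i). *)
Definition felem := seq nat -> R.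

Definition inF (k : nat) (x : felem) : Prop :=
  (exists s : seq (seq nat), forall w, x w != 0 -> w \in s) /\
  (forall w, x w != 0 -> w != [::] /\ all (inrng k) w).

Definition fword (u : seq nat) : felem := fun w => (w == u)%:R.
Definition fadd (x y : felem) : felem := fun w => x w + y w.
Definition fsub (x y : felem) : felem := fun w => x w - y w.
Definition fscale (c : R) (x : felem) : felem := fun w => c * x w.
Definition fzero : felem := fun _ => 0.

(* u * x * v for words u, v (possibly empty) and x in the free algebra *)
Definition sandwich (u v : seq nat) (x : felem) : felem := fun w =>
  if [&& (size u + size v <= size w)%N, take (size u) w == u &
         drop (size w - size v) w == v]
  then x (take (size w - size u - size v) (drop (size u) w)) else 0.

Definition powrel (i q : nat) : felem := fun w =>
  q%:R * fword [:: i] w - \sum_(i.+1 <= k < n.+1) e i k * fword [:: k] w.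
Definition mulrel (i j : nat) : felem := fun w =>
  fword [:: j; i] w - \sum_((maxn i j).+1 <= k < n.+1) b i j k * fword [:: k] w.

Definition isrel (k : nat) (rho : felem) : Prop :=
  (exists i q, inrng k i /\ r i = Some q /\ rho = powrel i q) \/
  (exists i j, inrng k i /\ inrng k j /\ rho = mulrel i j).

(* the two-sided ideal of F_k generated by the relations of P^{[k]};
   A^{[k]} = F_k / ideal k. *)
Inductive ideal (k : nat) : felem -> Prop :=
| ideal0 : ideal k fzero
| idealD x y : ideal k x -> ideal k y -> ideal k (fadd x y)
| idealZ c x : ideal k x -> ideal k (fscale c x)
| idealG u v rho : all (inrng k) u -> all (inrng k) v -> isrel k rho ->
    ideal k (sandwich u v rho).

Definition cvec := nat -> R.
Definition reduced (k : nat) (y : cvec) : Prop :=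
  forall i q, inrng k i -> r i = Some q -> crange (y i) q.
Definition lin (k : nat) (y : cvec) : felem := fun w =>
  match w with [:: i] => if inrng k i then y i else 0 | _ => 0 end.

Definition consistent (k : nat) : Prop :=
  (forall x, inF k x -> exists y, reduced k y /\ ideal k (fsub x (lin k y))) /\
  (forall y y', reduced k y -> reduced k y' -> ideal k (fsub (lin k y) (lin k y')) ->
     forall i, inrng k i -> y i = y' i).

Definition weight_ok (w : nat -> nat) : Prop :=
  (forall i, inrng 1 i -> (1 <= w i)%N) /\
  (forall i k, inrng 1 i -> inrng 1 k -> (i < k)%N -> r i <> None ->
      e i k != 0 -> (w i <= w k)%N) /\
  (forall i j k, inrng 1 i -> inrng 1 j -> inrng 1 k -> (maxn i j < k)%N ->
      b i j k != 0 -> (w i + w j <= w k)%N).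
Definition is_weight (w : nat -> nat) : Prop :=
  weight_ok w /\ forall w', weight_ok w' -> forall i, inrng 1 i -> (w i <= w' i)%N.
Definition wmax (w : nat -> nat) : nat := \max_(1 <= i < n.+1) w i.

Definition cgen (i : nat) : cvec := fun k => (k == i)%:R.
(* (sum_j u_j a_j) (sum_i v_i a_i) expanded with the relations a_j a_i = ... *)
Definition cmul (u v : cvec) : cvec := fun k =>
  if inrng 1 k then
    \sum_(1 <= j < n.+1) \sum_(1 <= i < n.+1)
       (if (maxn i j < k)%N then u j * v i * b i j k else 0)
  else 0.
Definition cscale (q : nat) (v : cvec) : cvec := fun k => q%:R * v k.
(* reduction of coefficients with the power relations, from a_1 up to a_n *)
Definition cstep (m : nat) (v : cvec) : cvec :=
  match r m with
  | None => v
  | Some q => let qr := cdiv (v m) q in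
      fun k => if k == m then qr.2
               else if (m < k <= n)%N then v k + qr.1 * e m k else v k
  end.
Definition collect (v : cvec) : cvec := foldl (fun v m => cstep m v) v (iota 1 n).
Definition veq (u v : cvec) : Prop := forall m, inrng 1 m -> u m = v m.

Definition test_eqs (w : nat -> nat) : Prop :=
  (forall i j k, inrng 1 i -> inrng 1 j -> inrng 1 k ->
     (w k + w j + w i <= wmax w)%N ->
     veq (collect (cmul (cgen k) (collect (cmul (cgen j) (cgen i)))))
         (collect (cmul (collect (cmul (cgen k) (cgen j))) (cgen i)))) /\
  (forall i j q, inrng 1 i -> inrng 1 j -> r j = Some q ->
     (w j + w i <= wmax w)%N ->
     veq (collect (cscale q (collect (cmul (cgen j) (cgen i)))))
         (collect (cmul (collect (cscale q (cgen j))) (cgen i)))) /\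
  (forall i j q, inrng 1 i -> inrng 1 j -> r i = Some q ->
     (w j + w i <= wmax w)%N ->
     veq (collect (cscale q (collect (cmul (cgen j) (cgen i)))))
         (collect (cmul (cgen j) (collect (cscale q (cgen i)))))).

(* tau_L(a_j w') = (sum_k b_{j,1,k} a_k) w', extended linearly; written
   coefficientwise: coefficient of a_k w' in tau_L x. *)
Definition tauL (x : felem) : felem := fun w =>
  match w with
  | [::] => 0
  | k :: w' => if (k <= n)%N then \sum_(2 <= j < k) b j 1 k * x (j :: w') else 0
  end.
(* tau_R(w' a_j) = w' (sum_k b_{1,j,k} a_k), extended linearly. *)
Definition tauR (x : felem) : felem := fun w =>
  match w with
  | [::] => 0
  | h :: t => let k := last h t in
      if (k <= n)%N then \sum_(2 <= j < k) b 1 j k * x (rcons (belast h t) j) else 0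
  end.

(* t : F_k -> F_k is R-linear and induces a (necessarily R-linear) map
   A^{[k]} -> A^{[k]}, i.e. it maps F_k to F_k and preserves the ideal. *)
Definition induces_linear_map (k : nat) (t : felem -> felem) : Prop :=
  (forall x, inF k x -> inF k (t x)) /\
  (forall c x y, t (fadd (fscale c x) y) = fadd (fscale c (t x)) (t y)) /\
  (forall x, ideal k x -> ideal k (t x)).

End Pres.

Definition int_range (x : int) (q : nat) : bool := (0 <= x) && (x < q%:Z).
Definition int_div (x : int) (q : nat) : int * int := ((x %/ q%:Z)%Z, (x %% q%:Z)%Z).
(* for a field all r_i are infinite, so these are never used *)
Definition triv_range (R : Type) (x : R) (q : nat) : bool := true.
Definition triv_div (R : nzRingType) (x : R) (q : nat) : R * R := (0, x).

(* Main.v *)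
Require Import Defs.
From mathcomp Require Import all_boot all_order all_algebra.
From mathcomp Require Import ring zify.
From Stdlib Require Import FunctionalExtensionality Classical.
Set Implicit Arguments. Unset Strict Implicit. Unset Printing Implicit Defensive.
Import Order.TTheory GRing.Theory Num.Theory.
Local Open Scope ring_scope.

Ltac gring := repeat match goal with |- context [pb ?P ?i ?j ?k] => let x := fresh "x" in move: (pb P i j k) => x end;
  repeat match goal with |- context [pe ?P ?i ?j] => let x := fresh "x" in move: (pe P i j) => x end; ring.

Section Gen.
Variable R : comNzRingType.

Lemma sum_delta (a b x : nat) (f : nat -> R) :
  \sum_(a <= l < b) (if l == x then f l else 0) = if (a <= x < b)%N then f x else 0.
Proof.
elim: b => [|b IH]; first by rewrite big_geq //; case: ifP => //; lia.
case: (leqP a b) => hab.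
  rewrite big_nat_recr //= IH.
  case: (eqVneq b x) => [hb|hbx].
    subst b; rewrite ?eqxx.
    have -> : (a <= x < x)%N = false by lia.
    have -> : (a <= x < x.+1)%N = true by lia.
    by rewrite add0r.
  rewrite addr0; congr (if _ then _ else _); lia.
rewrite big_geq; last lia.
case: ifP => //; lia.
Qed.

Lemma sum_delta' (a b x : nat) (f : nat -> R) :
  \sum_(a <= l < b) (if x == l then f l else 0) = if (a <= x < b)%N then f x else 0.
Proof. rewrite -sum_delta; apply: eq_bigr => i _; by rewrite eq_sym. Qed.

Lemma sum_cut (a k b : nat) (f : nat -> R) : (a <= k <= b)%N ->
  \sum_(a <= l < b) (if (l < k)%N then f l else 0) = \sum_(a <= l < k) f l.
Proof.
move=> h; rewrite (@big_cat_nat _ _ _ k) /=; try lia.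
rewrite [X in _ + X]big_nat_cond [X in _ + X]big1 ?addr0.
  rewrite big_nat_cond [RHS]big_nat_cond; apply: eq_bigr => i /andP[/andP[_ ->]] //.
move=> i /andP[/andP[h1 _] _]; case: ifP => //; lia.
Qed.


Lemma sum_1n (nn : nat) (F : nat -> R) (j k : nat) : (1 <= j)%N -> (2 <= k <= nn.+1)%N ->
  F 1%N = 0 ->
  \sum_(1 <= i < nn.+1) (if (maxn i j < k)%N then F i else 0) =
  \sum_(2 <= i < k) (if (j < k)%N then F i else 0).
Proof.
move=> hj hk hF; rewrite big_ltn; last lia.
rewrite hF; case: ifP => _; rewrite add0r.
rewrite -(@sum_cut 2 k nn.+1); last lia.
rewrite big_nat_cond [RHS]big_nat_cond; apply: eq_bigr => i /andP[hi _].
by repeat case: ifP => ?; try lia.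
rewrite -(@sum_cut 2 k nn.+1); last lia.
rewrite big_nat_cond [RHS]big_nat_cond; apply: eq_bigr => i /andP[hi _].
by repeat case: ifP => ?; try lia.
Qed.


Section Felem.
Variable P : presentation R.
Local Notation n := (pn P).
Local Notation r := (pr P).
Local Notation e := (pe P).
Local Notation b := (pb P).
Local Notation I := (ideal P 2).

Lemma ideal_ext (x y : felem R) : I x -> (forall u, x u = y u) -> I y.
Proof. by move=> h e1; have <- : x = y by apply: functional_extensionality. Qed.

Lemma ideal_zero (x : felem R) : (forall u, x u = 0) -> I x.
Proof. by move=> h; apply: ideal_ext (ideal0 _ _) _ => u; rewrite h. Qed.

Lemma ideal_add (x y : felem R) : I x -> I y -> I (fun u => x u + y u).
Proof. exact: idealD. Qed.

Lemma ideal_scale c (x : felem R) : I x -> I (fun u => c * x u).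
Proof. exact: idealZ. Qed.

Lemma ideal_sub (x y : felem R) : I x -> I y -> I (fun u => x u - y u).
Proof.
move=> hx hy; apply: ideal_ext (ideal_add hx (ideal_scale (-1) hy)) _ => u.
by rewrite mulN1r.
Qed.

Lemma ideal_sum (a c : nat) (co : nat -> R) (f : nat -> felem R) :
  (forall k, (a <= k < c)%N -> I (f k)) ->
  I (fun u => \sum_(a <= k < c) co k * f k u).
Proof.
elim: c => [|c IH] h.
  by apply: ideal_zero => u; rewrite big_geq.
case: (leqP a c) => hac.
  have h1 : I (fun u => \sum_(a <= k < c) co k * f k u).
    by apply: IH => k hk; apply: h; lia.
  have h2 : I (f c) by apply: h; lia.
  apply: ideal_ext (ideal_add h1 (ideal_scale (co c) h2)) _.
  by move=> u; rewrite big_nat_recr.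
by apply: ideal_zero => u; rewrite big_geq //; lia.
Qed.

Lemma sandwich00 (x : felem R) u : sandwich [::] [::] x u = x u.
Proof. by rewrite /sandwich /= !subn0 drop_size take0 eqxx drop0 take_size. Qed.

Lemma ideal_rel rho : isrel P 2 rho -> I rho.
Proof.
move=> h; apply: ideal_ext (idealG (u:=[::]) (v:=[::]) _ _ h) _ => // u.
exact: sandwich00.
Qed.

Lemma sandwichP (u v : seq nat) (x : felem R) (wd : seq nat) :
  (exists w0, wd = u ++ w0 ++ v /\ sandwich u v x wd = x w0) \/
  ((forall w0, wd <> u ++ w0 ++ v) /\ sandwich u v x wd = 0).
Proof.
rewrite /sandwich.
case: ifP => [/and3P[hs /eqP ht /eqP hd]|hf].
  left; eexists; split; last reflexivity.
  rewrite -{1}(cat_take_drop (size u) wd) ht; congr (_ ++ _).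
  set k := (size wd - size u - size v)%N.
  rewrite -{1}(cat_take_drop k (drop (size u) wd)); congr (_ ++ _).
  rewrite drop_drop.
  have -> : (k + size u = size wd - size v)%N by rewrite /k; lia.
  exact: hd.
right; split=> // w0 hw; move: hf; rewrite hw !size_cat.
rewrite take_size_cat // eqxx /=.
have -> : (size u + (size w0 + size v) - size v = size (u ++ w0))%N by rewrite size_cat; lia.
rewrite catA drop_size_cat // eqxx andbT; lia.
Qed.

Lemma cat_cancel (u v w0 w1 : seq nat) : u ++ w0 ++ v = u ++ w1 ++ v -> w0 = w1.
Proof.
move/(congr1 (drop (size u))); rewrite !drop_size_cat //.
move/(congr1 (fun s => take (size s - size v) s)); rewrite !size_cat !addnK.
by rewrite !take_size_cat.
Qed.

Lemma sandwich_comp u v u' v' (x : felem R) wd :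
  sandwich u v (sandwich u' v' x) wd = sandwich (u ++ u') (v' ++ v) x wd.
Proof.
case: (sandwichP u v (sandwich u' v' x) wd) => [[w0 [hw ->]]|[hn ->]].
  case: (sandwichP u' v' x w0) => [[w1 [hw1 ->]]|[hn1 ->]].
    case: (sandwichP (u ++ u') (v' ++ v) x wd) => [[w2 [hw2 ->]]|[hn2 _]].
      congr (x _); apply: (@cat_cancel (u ++ u') (v' ++ v)).
      by rewrite -hw2 hw hw1 !catA.
    by exfalso; apply: (hn2 w1); rewrite hw hw1 !catA.
  case: (sandwichP (u ++ u') (v' ++ v) x wd) => [[w2 [hw2 ->]]|[hn2 ->]] //.
  exfalso; apply: (hn1 w2); apply: (@cat_cancel u v).
  by rewrite -hw hw2 !catA.
case: (sandwichP (u ++ u') (v' ++ v) x wd) => [[w2 [hw2 ->]]|[hn2 ->]] //.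
by exfalso; apply: (hn (u' ++ w2 ++ v')); rewrite hw2 !catA.
Qed.

Lemma ideal_sandwich u v (x : felem R) : all (inrng P 2) u -> all (inrng P 2) v ->
  I x -> I (sandwich u v x).
Proof.
move=> hu hv; elim=> [|x1 y1 _ h1 _ h2|c x1 _ h1|u' v' rho hu' hv' hr].
- by apply: ideal_zero => wd; rewrite /sandwich; case: ifP.
- apply: ideal_ext (ideal_add h1 h2) _ => wd; rewrite /sandwich /fadd.
  by case: ifP; rewrite ?addr0.
- apply: ideal_ext (ideal_scale c h1) _ => wd; rewrite /sandwich /fscale.
  by case: ifP; rewrite ?mulr0.
- apply: ideal_ext (idealG (u := u ++ u') (v := v' ++ v) _ _ hr) _.
  + by rewrite all_cat hu hu'.
  + by rewrite all_cat hv hv'.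
  + by move=> wd; rewrite sandwich_comp.
Qed.

Lemma sandwich_cons j u v (x : felem R) k w' :
  sandwich (j :: u) v x (k :: w') = if k == j then sandwich u v x w' else 0.
Proof.
case: (sandwichP (j :: u) v x (k :: w')) => [[w0 [hw ->]]|[hn ->]].
  case: hw => -> hw; rewrite eqxx.
  case: (sandwichP u v x w') => [[w1 [hw1 ->]]|[hn1 _]].
    by congr (x _); apply: (@cat_cancel u v); rewrite -hw -hw1.
  by exfalso; apply: (hn1 w0).
case: eqP => // hk; subst k.
case: (sandwichP u v x w') => [[w1 [hw1 _]]|[_ ->]] //.
by exfalso; apply: (hn w1); rewrite hw1.
Qed.

Lemma sandwich_nil_l j u v (x : felem R) : sandwich (j :: u) v x [::] = 0.
Proof.
case: (sandwichP (j :: u) v x [::]) => [[w0 [hw _]]|[_ ->]] //.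
Qed.

Lemma tauL_sandL j u v (x : felem R) wd : (2 <= j)%N ->
  tauL P (sandwich (j :: u) v x) wd =
  \sum_(2 <= k < n.+1) (if (j < k)%N then b j 1 k else 0) * sandwich (k :: u) v x wd.
Proof.
move=> hj; case: wd => [|k0 w'] /=.
  by rewrite big1 // => k _; rewrite sandwich_nil_l mulr0.
set S := sandwich u v x w'.
rewrite [RHS](eq_bigr (fun k => if k0 == k then (if (j < k)%N then b j 1 k else 0) * S else 0));
  last by move=> k _; rewrite sandwich_cons; case: (k0 == k); rewrite ?mulr0.
rewrite sum_delta'.
rewrite (eq_bigr (fun j' => if j' == j then b j 1 k0 * S else 0));
  last by move=> jj _; rewrite sandwich_cons; case: eqP => [->|]; rewrite ?mulr0.
rewrite sum_delta.
rewrite hj /=.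
case: (ltnP j k0) => hjk.
  case: (leqP k0 n) => hk.
    by have -> : (2 <= k0 < n.+1)%N = true by lia.
  by have -> : (2 <= k0 < n.+1)%N = false by lia.
by case: ifP => //; case: ifP => //; rewrite mul0r.
Qed.

Lemma tauL_lin c (x y : felem R) wd :
  tauL P (fadd (fscale c x) y) wd = c * tauL P x wd + tauL P y wd.
Proof.
case: wd => [|k w'] /=; first by rewrite mulr0 addr0.
case: ifP => _; last by rewrite mulr0 addr0.
rewrite mulr_sumr -big_split /=; apply: eq_bigr => j _.
by rewrite /fadd /fscale; gring.
Qed.

Lemma tauL_sandR v (x : felem R) wd : x [::] = 0 ->
  tauL P (sandwich [::] v x) wd = sandwich [::] v (tauL P x) wd.
Proof.
move=> hx0; case: wd => [|k w'].
  case: (sandwichP [::] v (tauL P x) [::]) => [[w0 [hw ->]]|[_ ->]] //.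
  by case: w0 hw.
have [[w1 hw1]|hno] := classic (exists w1, w' = w1 ++ v).
  have -> : sandwich [::] v (tauL P x) (k :: w') = tauL P x (k :: w1).
    case: (sandwichP [::] v (tauL P x) (k :: w')) => [[w0 [hw ->]]|[hn _]].
      by congr (tauL P x _); apply: (@cat_cancel [::] v); rewrite -hw hw1.
    by exfalso; apply: (hn (k :: w1)); rewrite hw1.
  rewrite /= hw1; case: ifP => // _; apply: eq_bigr => j _; congr (_ * _).
  case: (sandwichP [::] v x (j :: w1 ++ v)) => [[w0 [hw ->]]|[hn _]].
    by congr (x _); apply: (@cat_cancel [::] v); rewrite -hw.
  by exfalso; apply: (hn (j :: w1)).
have -> : sandwich [::] v (tauL P x) (k :: w') = 0.
  case: (sandwichP [::] v (tauL P x) (k :: w')) => [[w0 [hw ->]]|[_ ->]] //.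
  case: w0 hw => [|k1 w0] //= [_ hw]; by exfalso; apply: hno; exists w0.
rewrite /=; case: ifP => // _; rewrite big1 // => j _.
case: (sandwichP [::] v x (j :: w')) => [[w0 [hw ->]]|[_ ->]]; last by rewrite mulr0.
case: w0 hw => [|k1 w0] hw; first by rewrite hx0 mulr0.
move: hw => /= [_ hw]; by exfalso; apply: hno; exists w0.
Qed.

Lemma fword1 i m : fword R [:: m] [:: i] = (i == m)%:R.
Proof. by rewrite /fword eqseq_cons andbT. Qed.

Lemma fword_long m i a l : fword R [:: m] [:: i, a & l] = 0.
Proof. by rewrite /fword eqseq_cons andbF. Qed.

Lemma sum_delta_mul (a c x : nat) (f : nat -> R) :
  \sum_(a <= k < c) f k * (x == k)%:R = if (a <= x < c)%N then f x else 0.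
Proof.
rewrite -sum_delta'; apply: eq_bigr => k _; case: (x == k); by rewrite ?mulr1 ?mulr0.
Qed.

Lemma fw2_2 k i a c : fword R [:: k; i] [:: a; c] = ((a == k) && (c == i))%:R.
Proof. by rewrite /fword !eqseq_cons andbT. Qed.
Lemma fw2_1 k i a : fword R [:: k; i] [:: a] = 0.
Proof. by rewrite /fword eqseq_cons andbF. Qed.
Lemma fw2_long k i a c d t : fword R [:: k; i] [:: a, c, d & t] = 0.
Proof. by rewrite /fword !eqseq_cons -(size_eq0 [:: d & t]) /= !andbF. Qed.
Lemma fw_nil u : fword R u [::] = (u == [::])%:R.
Proof. by rewrite /fword eq_sym. Qed.

End Felem.

Section Cvec.
Variable cdiv : R -> nat -> R * R.
Variable P : presentation R.
Variable w : nat -> nat.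
Local Notation n := (pn P).
Local Notation r := (pr P).
Local Notation e := (pe P).
Local Notation b := (pb P).
Local Notation I := (ideal P 2).
Local Notation C := (collect cdiv P).
Local Notation cm := (cmul P).

Hypothesis Hdiv : forall m q x, inrng P 1 m -> r m = Some q ->
  x = (cdiv x q).1 * q%:R + (cdiv x q).2.
Hypothesis Hdiv0 : forall m q, inrng P 1 m -> r m = Some q -> cdiv 0 q = (0, 0).
Hypothesis Hdivq : forall m q, inrng P 2 m -> r m = Some q -> cdiv q%:R q = (1, 0).

Definition good (y : cvec R) := I (lin P 2 y).

Lemma good_ext (y z : cvec R) : (forall k, inrng P 2 k -> y k = z k) -> good y -> good z.
Proof.
move=> h; rewrite /good => hy; apply: ideal_ext hy _ => [[|i [|? ?]]] //=.
by case: ifP => // /h ->.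
Qed.

Lemma good_zero (y : cvec R) : (forall k, inrng P 2 k -> y k = 0) -> good y.
Proof.
move=> h; apply: ideal_zero => [[|i [|? ?]]] //=; by case: ifP => // /h ->.
Qed.

Lemma good_add (y z : cvec R) : good y -> good z -> good (fun k => y k + z k).
Proof.
move=> hy hz; apply: ideal_ext (ideal_add hy hz) _ => [[|i [|? ?]]] //=; rewrite ?addr0 //.
by case: ifP; rewrite ?addr0.
Qed.

Lemma good_scale c (y : cvec R) : good y -> good (fun k => c * y k).
Proof.
move=> hy; apply: ideal_ext (ideal_scale c hy) _ => [[|i [|? ?]]] //=; rewrite ?mulr0 //.
by case: ifP; rewrite ?mulr0.
Qed.

Lemma good_sub (y z : cvec R) : good y -> good z -> good (fun k => y k - z k).
Proof.
move=> hy hz; apply: good_ext (good_add hy (good_scale (-1) hz)) => k _.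
by rewrite mulN1r.
Qed.

Definition pv (m : nat) : cvec R := fun k =>
  match r m with
  | Some q => if k == m then q%:R else if (m < k <= n)%N then - e m k else 0
  | None => 0
  end.

Lemma good_pv m : inrng P 2 m -> good (pv m).
Proof.
move=> hm; rewrite /good /pv.
case hr: (r m) => [q|]; last by apply: ideal_zero => [[|i [|? ?]]] //=; case: ifP.
apply: ideal_ext (ideal_rel (rho := powrel P m q) _) _.
  by left; exists m, q.
move=> [|i [|? ?]] /=; rewrite /powrel.
- rewrite /fword /= mulr0 big1 ?subr0 // => k _; by rewrite mulr0.
- rewrite fword1; under eq_bigr => k _ do rewrite fword1; rewrite sum_delta_mul.
  case: (eqVneq i m) => [->|him].
    have -> : (m.+1 <= m < n.+1)%N = false by lia.
    by rewrite hm /= mulr1 subr0.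
  rewrite /= mulr0 sub0r.
  have hm' := hm; move: hm'; rewrite /inrng => hm'.
  case: (boolP (m < i < n.+1)%N) => hi.
    rewrite /inrng; repeat (case: ifP => ?); rewrite ?oppr0 //; lia.
  rewrite /inrng; repeat (case: ifP => ?); rewrite ?oppr0 //; lia.
- rewrite !fword_long mulr0 big1 ?subr0 // => k _; by rewrite fword_long mulr0.
Qed.

Inductive PS (a : nat) : cvec R -> Prop :=
| PS0 : PS a (fun _ => 0)
| PSs m c y : (a <= m <= n)%N -> PS a y -> PS a (fun k => y k + c * pv m k).

Lemma PS_map (F : cvec R -> cvec R) a y :
  (forall k, inrng P 2 k -> F (fun _ => 0) k = 0) ->
  (forall y c m k, inrng P 2 k -> F (fun k => y k + c * pv m k) k = F y k + c * F (pv m) k) ->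
  (forall m, (a <= m <= n)%N -> good (F (pv m))) -> PS a y -> good (F y).
Proof.
move=> h0 hl hg; elim=> [|m c y1 hm _ IH]; first exact: good_zero.
apply: good_ext (good_add IH (good_scale c (hg m hm))) => k hk.
by rewrite hl.
Qed.

Lemma PS_good a y : (2 <= a)%N -> PS a y -> good y.
Proof.
move=> ha; apply: (PS_map (F := id)) => //= m hm; apply: good_pv; rewrite /inrng; lia.
Qed.

Lemma PS_1 a y : (2 <= a)%N -> PS a y -> y 1%N = 0.
Proof.
move=> ha; elim=> // m c y1 hm _ ->; rewrite /pv; case: (r m) => [q|]; last by rewrite mulr0 addr0.
have -> : (1 == m) = false by apply/eqP; lia.
have -> : (m < 1 <= n)%N = false by lia.
by rewrite mulr0 addr0.
Qed.

Lemma PS_mono a a' y : (a <= a')%N -> PS a' y -> PS a y.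
Proof.
move=> ha; elim=> [|m c y1 hm _ IH]; first exact: PS0.
apply: PSs => //; lia.
Qed.

Lemma cmul_linr u y c z l :
  cm u (fun k => y k + c * z k) l = cm u y l + c * cm u z l.
Proof.
rewrite /cmul; case: ifP => _; last by rewrite mulr0 addr0.
rewrite mulr_sumr -big_split; apply: eq_bigr => j _.
rewrite mulr_sumr -big_split; apply: eq_bigr => i _.
case: ifP => _ /=; [gring | by rewrite mulr0 addr0].
Qed.

Lemma cmul_linl u y c z l :
  cm (fun k => y k + c * z k) u l = cm y u l + c * cm z u l.
Proof.
rewrite /cmul; case: ifP => _; last by rewrite mulr0 addr0.
rewrite mulr_sumr -big_split; apply: eq_bigr => j _.
rewrite mulr_sumr -big_split; apply: eq_bigr => i _.
case: ifP => _ /=; [gring | by rewrite mulr0 addr0].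
Qed.

Lemma cmul_0r u l : cm u (fun _ => 0) l = 0.
Proof.
rewrite /cmul; case: ifP => // _; apply: big1 => j _; apply: big1 => i _.
by case: ifP; rewrite ?mulr0 ?mul0r.
Qed.

Lemma cmul_0l u l : cm (fun _ => 0) u l = 0.
Proof.
rewrite /cmul; case: ifP => // _; apply: big1 => j _; apply: big1 => i _.
by case: ifP; rewrite ?mulr0 ?mul0r.
Qed.

Lemma cmul_cgen_l j y l : inrng P 1 j ->
  cm (cgen R j) y l = if inrng P 1 l then
    \sum_(1 <= i < n.+1) (if (maxn i j < l)%N then y i * b i j l else 0) else 0.
Proof.
move=> hj; rewrite /cmul; case: ifP => // _.
rewrite (eq_bigr (fun j' => if j' == j then
   \sum_(1 <= i < n.+1) (if (maxn i j < l)%N then y i * b i j l else 0) else 0)).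
  by rewrite sum_delta; move: hj; rewrite /inrng => hj; case: ifP => //; lia.
move=> j' _; rewrite /cgen; case: eqP => [->|_].
  by apply: eq_bigr => i _; rewrite mul1r.
by apply: big1 => i _; case: ifP; rewrite ?mul0r.
Qed.

Lemma cmul_cgen_r y i l : inrng P 1 i ->
  cm y (cgen R i) l = if inrng P 1 l then
    \sum_(1 <= j < n.+1) (if (maxn i j < l)%N then y j * b i j l else 0) else 0.
Proof.
move=> hi; rewrite /cmul; case: ifP => // _.
apply: eq_bigr => j _.
rewrite (eq_bigr (fun i' => if i' == i then
   (if (maxn i j < l)%N then y j * b i j l else 0) else 0)).
  by rewrite sum_delta; move: hi; rewrite /inrng => hi; case: ifP => //; lia.
move=> i' _; rewrite /cgen; case: eqP => [->|_]; first by rewrite mulr1.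
by case: ifP; rewrite ?mulr0 ?mul0r.
Qed.

Lemma cstep_pv m y : inrng P 1 m ->
  exists c, forall k, cstep cdiv P m y k = y k + c * pv m k.
Proof.
move=> hm; rewrite /cstep /pv; case hr: (r m) => [q|]; last by exists 0 => k; rewrite mulr0 addr0.
move: (Hdiv (y m) hm hr); case: (cdiv (y m) q) => q1 q2 /= H.
exists (- q1) => k.
case: (eqVneq k m) => [->|hkm]; first by rewrite ?eqxx H /=; gring.
case: ifP => _; [gring | by rewrite mulr0 addr0].
Qed.

Lemma foldl_PS a s y : (1 <= a)%N -> all (fun m => (a <= m <= n)%N) s ->
  PS a (fun k => foldl (fun v m => cstep cdiv P m v) y s k - y k).
Proof.
move=> ha; elim: s y => [|m s IH] y /=.
  move=> _; have -> : (fun k => y k - y k) = (fun _ => 0) by apply: functional_extensionality => k; rewrite subrr.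
  exact: PS0.
move=> /andP[hm hall].
have [c hc] := cstep_pv y (m := m) ltac:(rewrite /inrng; lia).
have := PSs c hm (IH (cstep cdiv P m y) hall).
congr (PS a _); apply: functional_extensionality => k; rewrite hc; gring.
Qed.

Lemma foldl_id s y : (forall m, m \in s -> inrng P 1 m /\ y m = 0) ->
  foldl (fun v m => cstep cdiv P m v) y s = y.
Proof.
elim: s => [|m s IH] //= h.
have [hm hy] := h m (mem_head _ _).
have -> : cstep cdiv P m y = y.
  apply: functional_extensionality => k; rewrite /cstep; case hr: (r m) => [q|] //.
  rewrite hy (Hdiv0 hm hr) /=; case: eqP => [->|_]; first by rewrite hy.
  by case: ifP; rewrite ?mul0r ?addr0.
by apply: IH => m' hm'; apply: h; rewrite in_cons hm' orbT.
Qed.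

Lemma collect_eq y : y 1%N = 0 -> exists p, PS 2 p /\ forall k, C y k = y k + p k.
Proof.
move=> hy1; rewrite /collect.
case hn: (pn P) => [|n'].
  by exists (fun _ => 0); split; [exact: PS0 | move=> k; rewrite /= addr0].
rewrite -[iota 1 n'.+1]/(1%N :: iota 2 n') /=.
have -> : cstep cdiv P 1 y = y.
  have := @foldl_id [:: 1%N] y; rewrite /=; apply => m; rewrite inE => /eqP ->.
  by split=> //; rewrite /inrng hn.
eexists; split; first apply: (@foldl_PS 2 (iota 2 n') y) => //.
  by apply/allP => m; rewrite mem_iota hn; lia.
by move=> k /=; gring.
Qed.

Lemma collect_qe m q : inrng P 2 m -> r m = Some q ->
  exists p, PS m.+1 p /\ forall k,
    C (cscale q (cgen R m)) k = q%:R * cgen R m k - pv m k + p k.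
Proof.
move=> hm hr; have hm' := hm; move: hm'; rewrite /inrng => hm'.
rewrite /collect.
have -> : iota 1 n = iota 1 m.-1 ++ m :: iota m.+1 (n - m).
  have E : n = (m.-1 + (n - m).+1)%N by lia.
  rewrite {1}E iotaD; congr (_ ++ _); have -> : (1 + m.-1 = m)%N by lia.
  by [].
rewrite foldl_cat (@foldl_id (iota 1 m.-1)); last first.
  move=> m'; rewrite mem_iota => hm''; split; first by rewrite /inrng; lia.
  rewrite /cscale /cgen (_ : (m' == m) = false) ?mulr0 //; apply/eqP; lia.
rewrite /=.
set z := cstep cdiv P m (cscale q (cgen R m)).
have hz : forall k, z k = q%:R * cgen R m k - pv m k.
  move=> k; rewrite /z /cstep /pv hr /cscale /cgen eqxx mulr1 (Hdivq hm hr) /=.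
  case: (eqVneq k m) => [hk|hkm]; first by subst k; rewrite /= mulr1 subrr.
  rewrite /= mulr0 sub0r add0r; case: ifP => _; first by rewrite mul1r opprK.
  by rewrite oppr0.
eexists; split.
  apply: (@foldl_PS m.+1 (iota m.+1 (n - m)) z) => //.
  by apply/allP => m''; rewrite mem_iota; lia.
by move=> k /=; rewrite -hz; gring.
Qed.

Lemma cmul_1 y z : cm y z 1%N = 0.
Proof.
rewrite /cmul; case: ifP => // _; rewrite big_nat_cond; apply: big1 => j /andP[hj _].
rewrite big_nat_cond; apply: big1 => i /andP[hi _].
case: ifP => // h; exfalso; lia.
Qed.

Lemma cmul_lin3 u y1 y2 y3 c1 c2 c3 l :
  cm u (fun k => c1 * y1 k + c2 * y2 k + c3 * y3 k) l =
  c1 * cm u y1 l + c2 * cm u y2 l + c3 * cm u y3 l.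
Proof.
rewrite /cmul; case: ifP => _; last by rewrite !mulr0 !addr0.
rewrite !mulr_sumr -!big_split; apply: eq_bigr => j _.
rewrite !mulr_sumr -!big_split; apply: eq_bigr => i _.
case: ifP => _ /=; [gring | by rewrite !mulr0 !addr0].
Qed.

Lemma cmul_lin3l u y1 y2 y3 c1 c2 c3 l :
  cm (fun k => c1 * y1 k + c2 * y2 k + c3 * y3 k) u l =
  c1 * cm y1 u l + c2 * cm y2 u l + c3 * cm y3 u l.
Proof.
rewrite /cmul; case: ifP => _; last by rewrite !mulr0 !addr0.
rewrite !mulr_sumr -!big_split; apply: eq_bigr => j _.
rewrite !mulr_sumr -!big_split; apply: eq_bigr => i _.
case: ifP => _ /=; [gring | by rewrite !mulr0 !addr0].
Qed.

Lemma cmul_extr u y y' : (forall k, y k = y' k) -> cm u y = cm u y'.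
Proof. by move=> h; have -> : y = y' by apply: functional_extensionality. Qed.

Lemma cmul_extl u y y' : (forall k, y k = y' k) -> cm y u = cm y' u.
Proof. by move=> h; have -> : y = y' by apply: functional_extensionality. Qed.

Lemma collect_ext y y' : (forall k, y k = y' k) -> C y = C y'.
Proof. by move=> h; have -> : y = y' by apply: functional_extensionality. Qed.

Definition supp_ge (y : cvec R) (A : nat) :=
  forall k, inrng P 1 k -> y k != 0 -> (A <= w k)%N.

Hypothesis Hw : weight_ok P w.

Lemma supp_cgen j : supp_ge (cgen R j) (w j).
Proof. move=> k _; rewrite /cgen; case: (eqVneq k j) => [->|] //=; by rewrite eqxx. Qed.

Lemma supp_pv m : inrng P 1 m -> supp_ge (pv m) (w m).
Proof.
move=> hm k hk; rewrite /pv; case hr: (r m) => [q|]; last by rewrite eqxx.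
case: (eqVneq k m) => [->|hkm] //; case: ifP => hmk; last by rewrite eqxx.
rewrite oppr_eq0 => he; case: Hw => _ [He _]; apply: He => //; first lia.
by rewrite hr.
Qed.

Lemma supp_cmul y z A B : supp_ge y A -> supp_ge z B -> supp_ge (cm y z) (A + B).
Proof.
move=> hy hz l hl; apply: contraR; rewrite -ltnNge => hlt.
rewrite /cmul hl big_nat_cond; apply/eqP; apply: big1 => j /andP[hj _].
rewrite big_nat_cond; apply: big1 => i /andP[hi _].
case: ifP => // hij.
case: (eqVneq (y j) 0) => [->|hyj]; first by rewrite !mul0r.
case: (eqVneq (z i) 0) => [->|hzi]; first by rewrite mulr0 mul0r.
case: (eqVneq (b i j l) 0) => [->|hb]; first by rewrite mulr0.
exfalso; case: Hw => _ [_ Hb].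
have h1 := Hb i j l ltac:(rewrite /inrng; lia) ltac:(rewrite /inrng; lia) hl hij hb.
have h2 := hy j ltac:(rewrite /inrng; lia) hyj.
have h3 := hz i ltac:(rewrite /inrng; lia) hzi.
lia.
Qed.

Lemma w_le_d l : inrng P 1 l -> (w l <= wmax P w)%N.
Proof.
move=> hl; rewrite /wmax; apply: (@leq_bigmax_seq _ _ predT w l) => //.
by rewrite mem_index_iota; move: hl; rewrite /inrng; lia.
Qed.

Lemma supp_vanish y A : supp_ge y A -> (wmax P w < A)%N -> forall l, inrng P 1 l -> y l = 0.
Proof.
move=> hy hA l hl; apply/eqP; apply: contraT => hne.
have := hy l hl hne; have := w_le_d hl; lia.
Qed.

Hypothesis Ht : test_eqs cdiv P w.

Lemma solve_eq (G X : R) (L1 R1 : R) : L1 = R1 -> X - G = R1 - L1 -> X = G.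
Proof. move=> E1 E2; apply/eqP; rewrite -subr_eq0 E2 E1 subrr //. Qed.

Lemma G_pv m : inrng P 2 m -> good (cm (cgen R 1) (pv m)).
Proof.
suff H : forall t m, (n - m < t)%N -> inrng P 2 m -> good (cm (cgen R 1) (pv m)).
  by apply: (H (n - m).+1).
elim=> [|t IH] {}m ht hm; first lia.
have hm1 : inrng P 1 m by move: hm; rewrite /inrng; lia.
have h11 : inrng P 1 1 by move: hm; rewrite /inrng; lia.
case hr: (r m) => [q|]; last first.
  apply: good_zero => k _; rewrite (@cmul_extr _ _ (fun _ => 0)) ?cmul_0r // => k'.
  by rewrite /pv hr.
case: (leqP (w 1 + w m) (wmax P w)) => hw; last first.
  apply: good_zero => k hk.
  apply: (supp_vanish (supp_cmul (@supp_cgen 1) (supp_pv hm1)) hw).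
  by move: hk; rewrite /inrng; lia.
have Hv := Ht.2.2 m 1 q hm1 h11 hr hw.
set x := cm (cgen R 1) (cgen R m).
have [p1 [hp1 e1]] := collect_eq (cmul_1 (cgen R 1) (cgen R m)).
set y2 := cscale q (C x).
have y21 : y2 1%N = 0 by rewrite /y2 /cscale e1 cmul_1 (PS_1 _ hp1) ?addr0 ?mulr0.
have [p2 [hp2 e2]] := collect_eq y21.
have [p3 [hp3 e3]] := collect_qe hm hr.
set z := cm (cgen R 1) (C (cscale q (cgen R m))).
have [p4 [hp4 e4]] := collect_eq (cmul_1 _ _ : z 1%N = 0).
have ez : forall k, z k = q%:R * x k + (-1) * cm (cgen R 1) (pv m) k + 1 * cm (cgen R 1) p3 k.
  move=> k; rewrite /z (@cmul_extr _ _ (fun k => q%:R * cgen R m k + (-1) * pv m k + 1 * p3 k)).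
    by rewrite cmul_lin3.
  by move=> k'; rewrite e3; gring.
have good3 : good (cm (cgen R 1) p3).
  apply: (PS_map (F := cm (cgen R 1)) (a := m.+1)) => //.
  - by move=> k _; rewrite cmul_0r.
  - by move=> y0 c m0 k _; rewrite cmul_linr.
  - move=> m' hm'; apply: IH; first lia.
    by move: hm; rewrite /inrng; lia.
apply: (@good_ext (fun k => (- q%:R) * p1 k + (-1) * p2 k + cm (cgen R 1) p3 k + p4 k)).
  move=> k hk; have := Hv k ltac:(move: hk; rewrite /inrng; lia).
  rewrite e2 /y2 /cscale e1 e4 ez => E.
  by apply: (solve_eq E); rewrite /x; gring.
apply: good_add; last exact: PS_good hp4.
apply: good_add; last exact: good3.
apply: good_add; apply: good_scale; [exact: (PS_good _ hp1) | exact: (PS_good _ hp2)].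
Qed.

Definition Lr (y : cvec R) (i : nat) : felem R := fun wd =>
  match wd with [:: k; i'] => if (i' == i) && inrng P 2 k then y k else 0 | _ => 0 end.

Lemma Lr_sand y i wd : Lr y i wd = sandwich [::] [:: i] (lin P 2 y) wd.
Proof.
case: (sandwichP [::] [:: i] (lin P 2 y) wd) => [[w0 [hw ->]]|[hn ->]].
  subst wd; case: w0 => [|k [|c t]] //=; [by rewrite eqxx | by case: t].
move: hn; case: wd => [|k [|c [|d t]]] //= hn.
case: eqP => // hc; subst c; exfalso; exact: (hn [:: k]).
Qed.

Lemma cmul_gg j i l : inrng P 1 j -> inrng P 1 i ->
  cm (cgen R j) (cgen R i) l = if inrng P 1 l && (maxn i j < l)%N then b i j l else 0.
Proof.
move=> hj hi; rewrite cmul_cgen_l //; case: ifP => //= hl.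
rewrite (eq_bigr (fun i' => if i' == i then (if (maxn i j < l)%N then b i j l else 0) else 0)).
  by rewrite sum_delta; move: hi; rewrite /inrng => hi; case: ifP => //; lia.
move=> i' _; rewrite /cgen; case: (eqVneq i' i) => [->|] /=; first by rewrite mul1r.
by case: ifP; rewrite ?mul0r.
Qed.

Lemma powrel_pv m q j : r m = Some q -> powrel P m q [:: j] = pv m j.
Proof.
move=> hr; rewrite /powrel /pv hr fword1.
under eq_bigr => k _ do rewrite fword1.
rewrite sum_delta_mul; case: (eqVneq j m) => [->|hjm] /=.
  by rewrite mulr1 (_ : (m.+1 <= m)%N = false) ?subr0 //; lia.
rewrite mulr0 sub0r; repeat case: ifP => ?; rewrite ?oppr0 //; lia.
Qed.

Lemma pv_out m k : inrng P 2 m -> ~~ inrng P 2 k -> pv m k = 0.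
Proof.
rewrite /inrng => hm hk; rewrite /pv; case: (r m) => // q.
case: (eqVneq k m) => [hkm|hkm]; first by subst k; rewrite hm in hk.
by case: ifP => // ?; lia.
Qed.

Lemma lin_pv m q wd : inrng P 2 m -> r m = Some q -> lin P 2 (pv m) wd = powrel P m q wd.
Proof.
move=> hm hr; case: wd => [|i [|c t]] /=.
- by rewrite /powrel fw_nil mulr0 big1 ?subr0 // => k _; rewrite fw_nil mulr0.
- rewrite (powrel_pv _ hr); case: ifP => // hi.
  by rewrite pv_out // hi.
- by rewrite /powrel fword_long mulr0 big1 ?subr0 // => k _; rewrite fword_long mulr0.
Qed.

Lemma ideal_lin_sub y z : I (lin P 2 y) -> I (lin P 2 z) -> I (lin P 2 (fun k => y k - z k)).
Proof. exact: good_sub. Qed.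

Lemma A_lemma y i : y 1%N = 0 -> inrng P 2 i ->
  I (fun wd => Lr y i wd - lin P 2 (cm y (cgen R i)) wd).
Proof.
move=> hy1 hi.
have hi' := hi; move: hi'; rewrite /inrng => hi'.
have hs : I (fun u => \sum_(2 <= k < n.+1) y k * mulrel P i k u).
  apply: ideal_sum => k hk; apply: ideal_rel; right; exists i, k; split=> //; split=> //.
apply: (ideal_ext hs).
move=> [|a [|c [|d t]]] /=.
- rewrite subr0; apply: big1 => k _; rewrite /mulrel fw_nil big1 ?subr0 ?mulr0 // => l _.
  by rewrite fw_nil mulr0.
- rewrite sub0r.
  rewrite (eq_bigr (fun k => - (if (maxn i k < a < n.+1)%N then y k * b i k a else 0))); last first.
    move=> k _; rewrite /mulrel fw2_1 sub0r.
    under eq_bigr => l _ do rewrite fword1.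
    rewrite sum_delta_mul; case: ifP => _; by rewrite ?mulrN ?mulr0 ?oppr0.
  rewrite sumrN; congr (- _).
  case: (boolP (inrng P 2 a)) => ha.
    rewrite cmul_cgen_r; last by rewrite /inrng; lia.
    have -> : inrng P 1 a by move: ha; rewrite /inrng; lia.
    rewrite [RHS]big_ltn; last lia.
    have han : (a < n.+1)%N by move: ha; rewrite /inrng; lia.
    rewrite hy1 mul0r if_same add0r; apply: eq_bigr => k _; by rewrite han andbT.
  apply: big1 => k _; case: ifP => // ?; exfalso; move: ha; rewrite /inrng; lia.
- rewrite subr0.
  rewrite (eq_bigr (fun k => if a == k then (if c == i then y k else 0) else 0)); last first.
    move=> k _; rewrite /mulrel fw2_2 big1; last by move=> l _; rewrite fword_long mulr0.
    by rewrite subr0; case: (a == k); case: (c == i); rewrite /= ?mulr1 ?mulr0.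
  rewrite sum_delta' /inrng; by repeat case: ifP => ?; try lia.
- rewrite subr0; apply: big1 => k _; rewrite /mulrel fw2_long big1 ?subr0 ?mulr0 // => l _.
  by rewrite fword_long mulr0.
Qed.

Lemma good_cm_pv_r m i : inrng P 2 m -> inrng P 2 i -> good (cm (pv m) (cgen R i)).
Proof.
move=> hm hi.
have h1 : pv m 1%N = 0 by apply: pv_out; rewrite // /inrng.
have hA := A_lemma h1 hi.
have hS : I (Lr (pv m) i).
  apply: (ideal_ext (ideal_sandwich (u := [::]) (v := [:: i]) _ _ (good_pv hm))) => //=.
    by rewrite hi.
  by move=> wd; rewrite Lr_sand.
apply: (ideal_ext (ideal_sub hS hA)) => wd; by rewrite opprB addrC subrK.
Qed.

Lemma PS_cmr a p i : (2 <= a)%N -> PS a p -> inrng P 2 i -> good (cm p (cgen R i)).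
Proof.
move=> ha hp hi; apply: (PS_map (F := fun y => cm y (cgen R i)) (a := a)) => //.
- by move=> k _; rewrite cmul_0l.
- by move=> y0 c m0 k _; rewrite cmul_linl.
- move=> m hm; apply: good_cm_pv_r => //; rewrite /inrng; lia.
Qed.

Lemma PS_cml1 a p : (2 <= a)%N -> PS a p -> good (cm (cgen R 1) p).
Proof.
move=> ha hp; apply: (PS_map (F := cm (cgen R 1)) (a := a)) => //.
- by move=> k _; rewrite cmul_0r.
- by move=> y0 c m0 k _; rewrite cmul_linr.
- move=> m hm; apply: G_pv; rewrite /inrng; lia.
Qed.

Lemma M_L i j : inrng P 2 i -> inrng P 2 j ->
  good (fun k => cm (cm (cgen R 1) (cgen R j)) (cgen R i) k - cm (cgen R 1) (cm (cgen R j) (cgen R i)) k).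
Proof.
move=> hi hj.
have hi1 : inrng P 1 i by move: hi; rewrite /inrng; lia.
have hj1 : inrng P 1 j by move: hj; rewrite /inrng; lia.
have h11 : inrng P 1 1 by move: hj; rewrite /inrng; lia.
case: (leqP (w 1 + w j + w i) (wmax P w)) => hw; last first.
  apply: good_zero => k hk; have hk1 : inrng P 1 k by move: hk; rewrite /inrng; lia.
  rewrite (supp_vanish (supp_cmul (supp_cmul (@supp_cgen 1) (@supp_cgen j)) (@supp_cgen i)) hw) //.
  rewrite (@supp_vanish _ (w 1 + (w j + w i)) (supp_cmul (@supp_cgen 1) (supp_cmul (@supp_cgen j) (@supp_cgen i)))) ?subr0 //.
  lia.
have Hv := Ht.1 i j 1 hi1 hj1 h11 hw.
have [p1 [hp1 e1]] := collect_eq (cmul_1 (cgen R j) (cgen R i)).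
have [p2 [hp2 e2]] := collect_eq (cmul_1 (cgen R 1) (C (cm (cgen R j) (cgen R i)))).
have ez1 : forall k, cm (cgen R 1) (C (cm (cgen R j) (cgen R i))) k =
    cm (cgen R 1) (cm (cgen R j) (cgen R i)) k + 1 * cm (cgen R 1) p1 k.
  move=> k; rewrite (@cmul_extr _ _ (fun k => cm (cgen R j) (cgen R i) k + 1 * p1 k)).
    by rewrite cmul_linr.
  by move=> k'; rewrite e1 mul1r.
have [p3 [hp3 e3]] := collect_eq (cmul_1 (cgen R 1) (cgen R j)).
have [p4 [hp4 e4]] := collect_eq (cmul_1 (C (cm (cgen R 1) (cgen R j))) (cgen R i)).
have ez2 : forall k, cm (C (cm (cgen R 1) (cgen R j))) (cgen R i) k =
    cm (cm (cgen R 1) (cgen R j)) (cgen R i) k + 1 * cm p3 (cgen R i) k.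
  move=> k; rewrite (@cmul_extl _ _ (fun k => cm (cgen R 1) (cgen R j) k + 1 * p3 k)).
    by rewrite cmul_linl.
  by move=> k'; rewrite e3 mul1r.
apply: (@good_ext (fun k => cm (cgen R 1) p1 k + p2 k + (-1) * cm p3 (cgen R i) k + (-1) * p4 k)).
  move=> k hk; have := Hv k ltac:(move: hk; rewrite /inrng; lia).
  rewrite e2 e4 ez1 ez2 => E.
  by apply: (solve_eq (esym E)); gring.
apply: good_add; last by apply: good_scale; exact: (PS_good _ hp4).
apply: good_add; last by apply: good_scale; exact: (PS_cmr _ hp3 hi).
apply: good_add; [exact: (PS_cml1 _ hp1) | exact: (PS_good _ hp2)].
Qed.

Lemma lin_sub y z wd : lin P 2 (fun k => y k - z k) wd = lin P 2 y wd - lin P 2 z wd.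
Proof. case: wd => [|k [|? ?]] /=; rewrite ?subr0 //; by case: ifP; rewrite ?subr0. Qed.

Lemma tauL_powrel m q : inrng P 2 m -> r m = Some q -> I (tauL P (powrel P m q)).
Proof.
move=> hm hr; apply: (ideal_ext (G_pv hm)) => -[|k [|c t]] //=.
- have hp1 : pv m 1%N = 0 by apply: pv_out; rewrite // /inrng.
  case: (boolP (inrng P 2 k)) => hk.
    have hk' := hk; move: hk'; rewrite /inrng => hk'.
    have -> : (k <= n)%N by lia.
    rewrite cmul_cgen_l; last by rewrite /inrng; lia.
    have -> : inrng P 1 k by rewrite /inrng; lia.
    rewrite (@sum_1n n (fun i => pv m i * b i 1 k) 1 k isT ltac:(lia) ltac:(by rewrite /= hp1 mul0r)).
    have -> : (1 < k)%N by lia.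
    by apply: eq_bigr => j _; rewrite (powrel_pv _ hr) mulrC.
  case: ifP => // hkn; rewrite big_geq //; move: hk; rewrite /inrng; lia.
- case: ifP => // _; rewrite big1 // => j _.
  rewrite /powrel fword_long mulr0 sub0r big1 ?oppr0 ?mulr0 // => l _.
  by rewrite fword_long mulr0.
Qed.

Lemma tauL_mulrel i j : inrng P 2 i -> inrng P 2 j -> I (tauL P (mulrel P i j)).
Proof.
move=> hi hj.
have hi1 : inrng P 1 i by move: hi; rewrite /inrng; lia.
have hj1 : inrng P 1 j by move: hj; rewrite /inrng; lia.
have h11 : inrng P 1 1 by move: hj; rewrite /inrng; lia.
have hi' := hi; move: hi'; rewrite /inrng => hi'.
have hj' := hj; move: hj'; rewrite /inrng => hj'.
have hA := A_lemma (cmul_1 (cgen R 1) (cgen R j)) hi.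
have hM := M_L hi hj.
apply: (ideal_ext (ideal_add hA hM)) => wd.
rewrite lin_sub.
rewrite addrA subrK; case: wd => [|k [|c [|d t]]] /=.
- by rewrite subr0.
- rewrite sub0r.
  case: (boolP (inrng P 2 k)) => hk; last first.
    case: ifP => hkn; last by rewrite oppr0.
    by rewrite big_geq ?oppr0 //; move: hk; rewrite /inrng; lia.
  have hk' := hk; move: hk'; rewrite /inrng => hk'.
  have -> : (k <= n)%N by lia.
  rewrite cmul_cgen_l; last by rewrite /inrng; lia.
  have -> : inrng P 1 k by rewrite /inrng; lia.
  rewrite (@sum_1n n (fun i' => cm (cgen R j) (cgen R i) i' * b i' 1 k) 1 k isT ltac:(lia)
    ltac:(by rewrite /= cmul_1 mul0r)).
  have -> : (1 < k)%N by lia.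
  rewrite -sumrN; apply: eq_big_nat => j' hjj.
  rewrite /mulrel fw2_1 sub0r; under eq_bigr => l _ do rewrite fword1.
  rewrite sum_delta_mul cmul_gg //.
  have -> : inrng P 1 j' by rewrite /inrng; lia.
  have -> : (j' < n.+1)%N by lia.
  rewrite andbT /=; case: ifP => _; [by rewrite mulrN mulrC | by rewrite mul0r oppr0 mulr0].
- rewrite subr0.
  rewrite (eq_bigr (fun j' => if j' == j then b j 1 k * (c == i)%:R else 0)); last first.
    move=> j' _; rewrite /mulrel fw2_2 big1; last by move=> l _; rewrite fword_long mulr0.
    by rewrite subr0; case: (eqVneq j' j) => [->|]; rewrite /= ?mulr0.
  rewrite sum_delta cmul_gg //.
  case: (eqVneq c i) => hc /=; rewrite ?mulr0 ?mulr1 /inrng;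
    repeat case: ifP => ?; try lia; done.
- rewrite subr0; case: ifP => // _; rewrite big1 // => j' _.
  rewrite /mulrel fw2_long big1 ?subr0 ?mulr0 // => l _.
  by rewrite fword_long mulr0.
Qed.

Lemma tauL_zero wd : tauL P (fzero R) wd = 0.
Proof. case: wd => [|k w'] //=; case: ifP => // _; by rewrite big1 // => j _; rewrite mulr0. Qed.

Lemma tauL_add x y wd : tauL P (fadd x y) wd = tauL P x wd + tauL P y wd.
Proof.
case: wd => [|k w'] /=; first by rewrite addr0.
case: ifP => _; last by rewrite addr0.
by rewrite -big_split /=; apply: eq_bigr => j _; rewrite mulrDr.
Qed.

Lemma tauL_scale c x wd : tauL P (fscale c x) wd = c * tauL P x wd.
Proof.
case: wd => [|k w'] /=; first by rewrite mulr0.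
case: ifP => _; last by rewrite mulr0.
by rewrite mulr_sumr; apply: eq_bigr => j _; rewrite /fscale mulrCA.
Qed.

Lemma rel_nil rho : isrel P 2 rho -> rho [::] = 0.
Proof.
case=> [[i [q [_ [_ ->]]]]|[i [j [_ [_ ->]]]]].
  by rewrite /powrel fw_nil mulr0 big1 ?subr0 // => k _; rewrite fw_nil mulr0.
by rewrite /mulrel fw_nil big1 ?subr0 // => k _; rewrite fw_nil mulr0.
Qed.

Lemma tauL_rel rho : isrel P 2 rho -> I (tauL P rho).
Proof.
case=> [[i [q [hi [hr ->]]]]|[i [j [hi [hj ->]]]]].
  exact: tauL_powrel.
exact: tauL_mulrel.
Qed.

Lemma tauL_main : induces_linear_map P 2 (tauL P).
Proof.
split; [|split].
- move=> x hx0; case: hx0 => [[s hs] hx]; split.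
    exists [seq k :: behead u | k <- iota 0 n.+1, u <- s] => -[|k w'] /=; first by rewrite eqxx.
    case: ifP => hk; last by rewrite eqxx.
    move=> hne; have [[j [hj hxj]]|hno] := classic (exists j, (2 <= j < k)%N /\ x (j :: w') != 0).
      have := allpairs_f (fun k u => k :: behead u) (_ : k \in iota 0 n.+1) (hs _ hxj).
      by apply; rewrite mem_iota; lia.
    exfalso; move/negP: hne; apply; apply/eqP; rewrite big_nat_cond; apply: big1 => j /andP[hj _].
    case: (eqVneq (x (j :: w')) 0) => [->|hxj]; first by rewrite mulr0.
    by exfalso; apply: hno; exists j.
  move=> -[|k w'] /=; first by rewrite eqxx.
  case: ifP => hk; last by rewrite eqxx.
  move=> hne; have [[j [hj hxj]]|hno] := classic (exists j, (2 <= j < k)%N /\ x (j :: w') != 0).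
    have [_ /= /andP[_ ->]] := hx _ hxj; split=> //.
    by rewrite andbT /inrng; lia.
  exfalso; move/negP: hne; apply; apply/eqP; rewrite big_nat_cond; apply: big1 => j /andP[hj _].
  case: (eqVneq (x (j :: w')) 0) => [->|hxj]; first by rewrite mulr0.
  by exfalso; apply: hno; exists j.
- move=> c x y; apply: functional_extensionality => wd; exact: tauL_lin.
- move=> x; elim=> [|x1 y1 _ h1 _ h2|c x1 _ h1|u v rho hu hv hr].
  + exact: ideal_zero tauL_zero.
  + by apply: ideal_ext (ideal_add h1 h2) _ => wd; rewrite tauL_add.
  + by apply: ideal_ext (ideal_scale c h1) _ => wd; rewrite tauL_scale.
  + case: u hu => [|j u] hu.
      apply: ideal_ext (ideal_sandwich (u := [::]) hu hv (tauL_rel hr)) _ => wd.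
      by rewrite tauL_sandR // rel_nil.
    move: hu => /= /andP[hj hu].
    have hj2 : (2 <= j)%N by move: hj; rewrite /inrng; lia.
    have hs : I (fun wd => \sum_(2 <= k < n.+1) (if (j < k)%N then b j 1 k else 0) * sandwich (k :: u) v rho wd).
      apply: ideal_sum => k hk; apply: idealG => //=.
      by rewrite hu andbT /inrng; lia.
    by apply: ideal_ext hs _ => wd; rewrite tauL_sandL.
Qed.

End Cvec.
End Gen.

Section Op.
Variable R : comNzRingType.

Definition popp (P : presentation R) : presentation R :=
  Pres (pn P) (pr P) (pe P) (fun i j k => pb P j i k).
Definition revf (x : felem R) : felem R := fun wd => x (rev wd).

Lemma popp_invol P : popp (popp P) = P.
Proof. by case: P. Qed.

Lemma fword_rev u wd : fword R u (rev wd) = fword R (rev u) wd.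
Proof. by rewrite /fword (can2_eq revK revK). Qed.

Lemma tauR_rev P x wd : tauR P x wd = revf (tauL (popp P) (revf x)) wd.
Proof.
case: wd => [|h t] //=; rewrite /revf.
have E : rev (h :: t) = last h t :: rev (belast h t) by rewrite [h :: t]lastI rev_rcons.
rewrite E /=; case: ifP => // _; apply: eq_bigr => j _.
by rewrite rev_cons revK.
Qed.

Lemma sandwich_rev u v (x : felem R) wd :
  sandwich u v x (rev wd) = sandwich (rev v) (rev u) (revf x) wd.
Proof.
case: (sandwichP u v x (rev wd)) => [[w0 [hw ->]]|[hn ->]].
  case: (sandwichP (rev v) (rev u) (revf x) wd) => [[w1 [hw1 ->]]|[hn1 _]].
    rewrite /revf; congr (x _); apply: (@cat_cancel u v).
    by rewrite -hw hw1 !rev_cat !revK catA.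
  exfalso; apply: (hn1 (rev w0)).
  by rewrite -[wd]revK hw !rev_cat catA.
case: (sandwichP (rev v) (rev u) (revf x) wd) => [[w1 [hw1 _]]|[_ ->]] //.
by exfalso; apply: (hn (rev w1)); rewrite hw1 !rev_cat !revK catA.
Qed.

Lemma ideal_rev P x : ideal P 2 x -> ideal (popp P) 2 (revf x).
Proof.
elim=> [|x1 y1 _ h1 _ h2|c x1 _ h1|u v rho hu hv hr].
- by apply: ideal_zero.
- by apply: (ideal_ext (ideal_add h1 h2)).
- by apply: (ideal_ext (ideal_scale c h1)).
- have hrr : isrel (popp P) 2 (revf rho).
    case: hr => [[i [q [hi [hq ->]]]]|[i [j [hi [hj ->]]]]].
      left; exists i, q; split=> //; split=> //.
      apply: functional_extensionality => wd; rewrite /revf /powrel fword_rev /=.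
      by congr (_ - _); apply: eq_bigr => k _; rewrite fword_rev.
    right; exists j, i; split=> //; split=> //.
    apply: functional_extensionality => wd; rewrite /revf /mulrel fword_rev /= maxnC.
    by congr (_ - _); apply: eq_bigr => k _; rewrite fword_rev.
  apply: (ideal_ext (idealG (u := rev v) (v := rev u) _ _ hrr)).
  + by rewrite all_rev.
  + by rewrite all_rev.
  + by move=> wd; rewrite /revf sandwich_rev.
Qed.

Lemma inF_rev P x : inF P 2 x -> inF (popp P) 2 (revf x).
Proof.
move=> [[s hs] hx]; split.
  exists (map rev s) => wd hw; rewrite -[wd]revK map_f //; exact: hs.
move=> wd hw; have [h1 h2] := hx _ hw; split.
  by apply: contra h1 => /eqP ->.
by move: h2; rewrite all_rev.
Qed.

Lemma cmul_popp P y z : cmul (popp P) y z = cmul P z y.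
Proof.
apply: functional_extensionality => k; rewrite /cmul /inrng /=; case: ifP => // _.
rewrite exchange_big; apply: eq_bigr => j _; apply: eq_bigr => i _.
by rewrite maxnC; case: ifP => // _; rewrite [y i * z j]mulrC.
Qed.

Lemma test_eqs_popp cdiv P w : test_eqs cdiv P w -> test_eqs cdiv (popp P) w.
Proof.
move=> [h1 [h2 h3]]; split; [|split].
- move=> i j k hi hj hk hw; rewrite !cmul_popp => m hm.
  by symmetry; apply: (h1 k j i) => //; move: hw; rewrite /wmax /=; lia.
- move=> i j q hi hj hq hw; rewrite !cmul_popp => m hm.
  by apply: (h3 j i q) => //; move: hw; rewrite /wmax /=; lia.
- move=> i j q hi hj hq hw; rewrite !cmul_popp => m hm.
  by apply: (h2 j i q) => //; move: hw; rewrite /wmax /=; lia.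
Qed.

Lemma weight_ok_popp P w : weight_ok P w -> weight_ok (popp P) w.
Proof.
move=> [h1 [h2 h3]]; split=> //; split=> // i j k hi hj hk hm hb.
rewrite addnC; apply: (h3 j i k) => //; by rewrite maxnC.
Qed.

End Op.

Lemma tauR_lin (R : comNzRingType) (P : presentation R) c (x y : felem R) :
  tauR P (fadd (fscale c x) y) = fadd (fscale c (tauR P x)) (tauR P y).
Proof.
apply: functional_extensionality => -[|h t]; rewrite /fadd /fscale /=; first by rewrite mulr0 addr0.
case: ifP => _; last by rewrite mulr0 addr0.
rewrite mulr_sumr -big_split /=; apply: eq_bigr => j _.
by rewrite mulrDr mulrCA.
Qed.

Theorem general (R : comNzRingType) (cdiv : R -> nat -> R * R) (P : presentation R) (w : nat -> nat) :
  (forall (m q : nat) (x : R),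
     inrng P 1 m -> pr P m = Some q -> x = (cdiv x q).1 * q%:R + (cdiv x q).2) ->
  (forall m q : nat, inrng P 1 m -> pr P m = Some q -> cdiv 0 q = (0, 0)) ->
  (forall m q : nat, inrng P 2 m -> pr P m = Some q -> cdiv q%:R q = (1, 0)) ->
  weight_ok P w -> test_eqs cdiv P w ->
  induces_linear_map P 2 (tauL P) /\ induces_linear_map P 2 (tauR P).
Proof.
move=> H1 H2 H3 Hw Ht; split; first exact: tauL_main H1 H2 H3 Hw Ht.
have [hF [_ hI]] := @tauL_main R cdiv (popp P) w H1 H2 H3 (weight_ok_popp Hw) (test_eqs_popp Ht).
have E : tauR P = fun x => revf (tauL (popp P) (revf x)).
  by apply: functional_extensionality => x; apply: functional_extensionality => wd; rewrite tauR_rev.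
split; [|split].
- move=> x hx; rewrite E; have := inF_rev (hF _ (inF_rev hx)); by rewrite popp_invol.
- exact: tauR_lin.
- move=> x hx; rewrite E; have := ideal_rev (hI _ (ideal_rev hx)); by rewrite popp_invol.
Qed.

Theorem lemma22 :
  (forall (P : presentation int) (w : nat -> nat),
      wf_pres int_range P -> is_weight P w ->
      consistent int_range P 2 -> test_eqs int_div P w ->
      induces_linear_map P 2 (tauL P) /\ induces_linear_map P 2 (tauR P)) /\
  (forall (F : fieldType) (P : presentation F) (w : nat -> nat),
      (forall i, pr P i = None) ->
      wf_pres (@triv_range F) P -> is_weight P w ->
      consistent (@triv_range F) P 2 -> test_eqs (@triv_div F) P w ->
      induces_linear_map P 2 (tauL P) /\ induces_linear_map P 2 (tauR P)).
Proof.
split.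
- move=> P w [hq _] [Hw _] _ Ht; apply: (@general int int_div P w _ _ _ Hw Ht).
  + by move=> m q x _ _; rewrite /int_div /= natz -divz_eq.
  + by move=> m q _ _; rewrite /int_div div0z mod0z.
  + move=> m q hm hr.
    have hm1 : inrng P 1 m by move: hm; rewrite /inrng => /andP[h1 h2]; rewrite h2 andbT; exact: ltnW.
    have hq0 := hq m q hm1 hr.
    rewrite /int_div natz divzz modzz.
    by have -> : (q%:Z != 0) = true by apply/eqP; lia.
- move=> F P w hN _ [Hw _] _ Ht; apply: (@general F (@triv_div F) P w _ _ _ Hw Ht).
  + by move=> m q x _; rewrite hN.
  + by move=> m q _; rewrite hN.
  + by move=> m q _; rewrite hN.
Qed.
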